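(* Let $(S,d)$ be a metric space with at least two points. If $f\in\operatorname{ext}(B^S_{\mathrm{FM}})$, then $\|f\|_\infty=1$. If $f\in\operatorname{ext}_*(B^S_{\mathrm{FM}})$, then also $|f|_L=1$.
   Context: $\mathrm{BL}(S)$ is the space of bounded real-valued Lipschitz functions on $S$, $|f|_L=\sup_{x\neq y}|f(x)-f(y)|/d(x,y)$, $\|f\|_{\mathrm{FM}}=\max(\|f\|_\infty,|f|_L)$, $B^S_{\mathrm{FM}}=\{f\in\mathrm{BL}(S):\|f\|_{\mathrm{FM}}\le1\}$, $\operatorname{ext}$ denotes extreme points, and $\operatorname{ext}_*(B^S_{\mathrm{FM}})=\operatorname{ext}(B^S_{\mathrm{FM}})\setminus\{f\in B^S_{\mathrm{FM}}:|f|=\mathbf{1}\}$. *)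

(* Defs.v *)
From HB Require Import structures.
From mathcomp Require Import all_boot all_order all_algebra.
From mathcomp Require Import boolp classical_sets reals.
Set Implicit Arguments. Unset Strict Implicit. Unset Printing Implicit Defensive.
Import Order.TTheory GRing.Theory Num.Theory.
Local Open Scope ring_scope.
Local Open Scope classical_set_scope.

Section BL.
Variables (R : realType) (S : Type) (d : S -> S -> R).

Definition is_metric : Prop :=
  (forall x y, 0 <= d x y) /\
  (forall x y, d x y = 0 <-> x = y) /\
  (forall x y, d x y = d y x) /\
  (forall x y z, d x z <= d x y + d y z).

Definition is_BL (f : S -> R) : Prop :=
  (exists M : R, forall x, `|f x| <= M) /\
  (exists L : R, forall x y, `|f x - f y| <= L * d x y).

Definition supnorm (f : S -> R) : R := sup [set `|f x| | x in [set: S]].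

Definition lipconst (f : S -> R) : R :=
  sup [set r | exists x y, x <> y /\ r = `|f x - f y| / d x y].

Definition FMnorm (f : S -> R) : R := Num.max (supnorm f) (lipconst f).

Definition BFM (f : S -> R) : Prop := is_BL f /\ FMnorm f <= 1.

Definition is_ext (f : S -> R) : Prop :=
  BFM f /\
  forall (g h : S -> R) (t : R), BFM g -> BFM h -> 0 < t < 1 ->
    f = (fun x => t * g x + (1 - t) * h x) -> g = h.

Definition is_ext_star (f : S -> R) : Prop :=
  is_ext f /\ ~ (forall x, `|f x| = 1).

End BL.

(* Main.v *)
Require Import Defs.
From HB Require Import structures.
From mathcomp Require Import all_boot all_order all_algebra.
From mathcomp Require Import boolp classical_sets reals.
From mathcomp Require Import lra ring.
Import Order.TTheory GRing.Theory Num.Theory.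
Local Open Scope ring_scope.
Local Open Scope classical_set_scope.

Section H.
Variables (R : realType) (S : Type) (d : S -> S -> R).
Hypothesis hd : is_metric d.
Hypothesis htwo : exists x y : S, x <> y.

Lemma dpos {x y} : x <> y -> 0 < d x y.
Proof.
case: hd => h0 [h1 _] nxy; rewrite lt_neqAle h0 andbT; apply/negP => /eqP h.
by apply: nxy; apply/h1.
Qed.

Lemma supnorm_le (f : S -> R) c : (forall x, `|f x| <= c) -> supnorm f <= c.
Proof.
move=> hf; case: htwo => x [y _]; apply: ge_sup.
  by exists `|f x|; exists x.
by move=> r [z _ <-].
Qed.

Lemma supnorm_ge (f : S -> R) x : is_BL d f -> `|f x| <= supnorm f.
Proof.
move=> [[M hM] _]; apply: ub_le_sup; last by exists x.
by exists M => r [z _ <-].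
Qed.

Lemma lip_le (f : S -> R) c : (forall x y, `|f x - f y| <= c * d x y) -> lipconst d f <= c.
Proof.
move=> hf; case: htwo => x [y nxy]; apply: ge_sup.
  by exists (`|f x - f y| / d x y); exists x, y.
move=> r [u [v [nuv ->]]].
by rewrite ler_pdivrMr ?dpos.
Qed.

Lemma lip_ge (f : S -> R) x y : is_BL d f -> `|f x - f y| <= lipconst d f * d x y.
Proof.
move=> [_ [L hL]].
have [->|nxy] := pselect (x = y).
  case: hd => _ [h1 _]; rewrite subrr normr0 (proj2 (h1 y y) erefl) mulr0 //.
have hp := dpos nxy.
rewrite -ler_pdivrMr //; apply: ub_le_sup; last by exists x, y.
exists L => r [u [v [nuv ->]]].
by rewrite ler_pdivrMr ?dpos.
Qed.

Lemma BFM_of (g : S -> R) : (forall x, `|g x| <= 1) -> (forall x y, `|g x - g y| <= d x y) -> BFM d g.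
Proof.
move=> h1 h2; split; first by split; [exists 1 | exists 1 => x y; rewrite mul1r].
rewrite ge_max supnorm_le // lip_le // => x y; rewrite mul1r //.
Qed.

Lemma BFM_sup (f : S -> R) : BFM d f -> supnorm f <= 1.
Proof. by case=> _; rewrite ge_max => /andP[]. Qed.
Lemma BFM_lip (f : S -> R) : BFM d f -> lipconst d f <= 1.
Proof. by case=> _; rewrite ge_max => /andP[]. Qed.

Lemma lip_nonneg (f : S -> R) : is_BL d f -> 0 <= lipconst d f.
Proof.
move=> hf; case: htwo => x [y nxy].
have := lip_ge f x y hf.
have hp := dpos nxy.
move=> h; have : 0 <= lipconst d f * d x y by apply: le_trans h.
by rewrite pmulr_lge0.
Qed.

Lemma max_lip (a u v : R) : `|Num.max 0 (a - u) - Num.max 0 (a - v)| <= `|u - v|.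
Proof.
have [h1|h1] := leP 0 (a - u); have [h2|h2] := leP 0 (a - v);
  rewrite ?(max_r h1) ?(max_r h2) ?(max_l (ltW h1)) ?(max_l (ltW h2));
  have [h3|h3] := leP 0 (u - v); rewrite ?(ger0_norm h3) ?(ltr0_norm h3);
  rewrite ler_norml; apply/andP; split; lra.
Qed.

Lemma ext_pert (f p : S -> R) : is_ext d f ->
  (forall x, `|f x + p x| <= 1) -> (forall x, `|f x - p x| <= 1) ->
  (forall x y, `|p x - p y| <= (1 - lipconst d f) * d x y) ->
  forall x, p x = 0.
Proof.
move=> [hB hext] h1 h2 h3.
have hl := BFM_lip f hB.
have hBL : is_BL d f by case: hB.
have key : forall x y, `|f x - f y| + `|p x - p y| <= d x y.
  move=> x y; have := lip_ge f x y hBL; have := h3 x y.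
  have : 0 <= d x y by case: hd.
  move=> h0 ha hb.
  have : lipconst d f * d x y + (1 - lipconst d f) * d x y = d x y by ring.
  lra.
have Bg : BFM d (fun x => f x + p x).
  apply: BFM_of => // x y; apply: le_trans (key x y).
  have -> : f x + p x - (f y + p y) = (f x - f y) + (p x - p y) by ring.
  exact: ler_normD.
have Bh : BFM d (fun x => f x - p x).
  apply: BFM_of => // x y; apply: le_trans (key x y).
  have -> : f x - p x - (f y - p y) = (f x - f y) - (p x - p y) by ring.
  exact: ler_normB.
have := hext _ _ (2^-1) Bg Bh.
have ht : (0 < 2^-1 :> R) && (2^-1 < 1 :> R).
  by apply/andP; split; [rewrite invr_gt0 ltr0n | rewrite invf_lt1 ?ltr0n // ltr1n].
move=> /(_ ht) H x.
have hfe : f = (fun x => 2^-1 * (f x + p x) + (1 - 2^-1) * (f x - p x)).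
  by apply: funext => y; field; rewrite ?pnatr_eq0.
have /(congr1 (fun g => g x)) /= := H hfe.
move=> hx.
move: hx.
lra.
Qed.

Lemma main (f : S -> R) :
  (is_ext d f -> supnorm f = 1) /\
  (is_ext_star d f -> supnorm f = 1 /\ lipconst d f = 1).
Proof.
case: (hd) => d0 [dE [dS dT]].
have dxx : forall x, d x x = 0 by move=> x; apply/dE.
have P1 : is_ext d f -> supnorm f = 1.
  move=> he; have [hB _] := he.
  have hs := BFM_sup f hB; have hl := BFM_lip f hB.
  have hBL : is_BL d f by case: hB.
  apply/eqP; rewrite eq_le hs /= leNgt; apply/negP => hlt.
  case: htwo => x0 _.
  have := ext_pert f (fun _ => 1 - supnorm f) he.
  have sn : forall x, `|f x| <= supnorm f by move=> x; apply: supnorm_ge.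
  have Hn : `|1 - supnorm f| = 1 - supnorm f by rewrite ger0_norm // subr_ge0 ltW.
  have H1 : forall x, `|f x + (1 - supnorm f)| <= 1.
    move=> x; apply: le_trans (ler_normD _ _) _; rewrite Hn; have := sn x; lra.
  have H2 : forall x, `|f x - (1 - supnorm f)| <= 1.
    move=> x; apply: le_trans (ler_normB _ _) _; rewrite Hn; have := sn x; lra.
  move=> /(_ H1 H2) H.
  have : forall x y, `|(1 - supnorm f) - (1 - supnorm f)| <= (1 - lipconst d f) * d x y.
    by move=> x y; rewrite subrr normr0 mulr_ge0 // subr_ge0.
  by move=> /H /(_ x0) h0; move: hlt; rewrite -subr_gt0 h0 ltxx.
split => // -[he hn].
have hs := P1 he; split => //.
have [hB _] := he.
have hl := BFM_lip f hB.
have hBL : is_BL d f by case: hB.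
apply/eqP; rewrite eq_le hl /= leNgt; apply/negP => hlt.
have [x1 hx1] : exists x1, `|f x1| != 1.
  apply: contrapT => hc; apply: hn => x; apply/eqP; apply: contrapT => hx.
  by apply: hc; exists x; apply/negP.
have sn : forall x, `|f x| <= supnorm f by move=> x; apply: supnorm_ge.
have ha : `|f x1| < 1 by rewrite lt_neqAle hx1 -hs sn.
pose a := 1 - `|f x1|.
pose e := 1 - lipconst d f.
pose p := fun x => e * Num.max 0 (a - d x x1).
have l0 := lip_nonneg f hBL.
have pge : forall x, 0 <= p x by move=> x; rewrite mulr_ge0 ?le_max ?lexx // /e subr_ge0.
have bnd : forall x, `|f x| + p x <= 1.
  move=> x; rewrite /p /=.
  have [hc|hc] := leP 0 (a - d x x1).

    have hL := lip_ge f x x1 hBL.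
    have hT : `|f x| <= `|f x - f x1| + `|f x1|.
      by have := ler_normD (f x - f x1) (f x1); rewrite subrK.
    have := d0 x x1.
    rewrite /e /a in hc * => h0.
    nra.
  rewrite mulr0 addr0 -hs; exact: sn.
have := ext_pert f p he.
have H1 : forall x, `|f x + p x| <= 1.
  move=> x; apply: le_trans (ler_normD _ _) _; rewrite (ger0_norm (pge x)); exact: bnd.
have H2 : forall x, `|f x - p x| <= 1.
  move=> x; apply: le_trans (ler_normB _ _) _; rewrite (ger0_norm (pge x)); exact: bnd.
move=> /(_ H1 H2) H.
have : forall x y, `|p x - p y| <= (1 - lipconst d f) * d x y.
  move=> x y; rewrite /p -mulrBr normrM (ger0_norm (_ : 0 <= e)); last by rewrite /e subr_ge0.
  apply: ler_wpM2l; first by rewrite /e subr_ge0.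
  apply: le_trans (max_lip _ _ _) _.
  have := dT x y x1; have := dT y x x1; rewrite (dS y x) => t1 t2.
  rewrite ler_norml; apply/andP; split; lra.
move=> /H /(_ x1); rewrite /p dxx subr0 (max_r (_ : 0 <= a)); last by rewrite /a subr_ge0 ltW.
move=> /eqP; rewrite mulf_eq0 /e /a => /orP[]; move/eqP; lra.
Qed.
End H.

Local Close Scope classical_set_scope.

Theorem lemma3p2 (R : realType) (S : Type) (d : S -> S -> R)
  (hd : is_metric d) (htwo : exists x y : S, x <> y) (f : S -> R) :
  (is_ext d f -> supnorm f = 1) /\
  (is_ext_star d f -> supnorm f = 1 /\ lipconst d f = 1).
Proof. exact (@main R S d hd htwo f). Qed.
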